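(* Let $\beta\in(1/2,1)$ and $r>0$, and suppose the standing assumptions below hold (each $G_{n,i}$ has a continuous density $f_{n,i}$ on $(0,1)$ with $\sup_x f_{n,i}(x)\le C$ for a constant $C<\infty$ independent of $n,i$, and the tail condition (T) holds). Suppose that $r<\rho(\beta)$, i.e. \[ \max_{q\in(0,1]}\Big(\tfrac{1+q}{2}-\alpha(q,r)-\beta\Big)<0 . \] Then the Higher Criticism test is asymptotically powerless for testing $H_0$ against $H_1^{(n)}$: for every real sequence $(h(n))_{n\ge1}$, \[ \Pr_{H_0}\big(\mathrm{HC}_n^\star>h(n)\big)+\Pr_{H_1^{(n)}}\big(\mathrm{HC}_n^\star\le h(n)\big)\to 1\quad (n\to\infty). \]
   Context: Hypotheses. For each $n$, $\pi_1,\dots,\pi_n$ are P-values. Under $H_0$: $\pi_i$ i.i.d. $\mathrm{Unif}(0,1)$. Under $H_1^{(n)}$: $\pi_1,\dots,\pi_n$ are independent with $\pi_i\sim(1-\epsilon_n)\mathrm{Unif}(0,1)+\epsilon_n G_{n,i}$, where $\epsilon_n=n^{-\beta}$ and $G_{n,i}$ is a probability distribution on $(0,1)$ stochastically smaller than $\mathrm{Unif}(0,1)$ (i.e. $G_{n,i}(t)\ge t$ for $t\in(0,1)$). Tail condition (T): $\alpha:[0,1]\times(0,\infty)\to[0,\infty)$ is continuous, nondecreasing in $q$ and nonincreasing in $r$, and there is a sequence $\delta_n\to0$ such that for all $n$, all $1\le i\le n$ and all $q\in(0,1]$, with $X\sim G_{n,i}$, \[ \Big|\,-\log\Pr(X<n^{-q})-\alpha(q,r)\log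 n\,\Big|\le \delta_n\log n . \] The function $\rho$ is $\rho(\beta)=\sup\{r>0:\max_{q\in(0,1]}(\frac{1+q}{2}-\alpha(q,r)-\beta)<0\}$. Higher Criticism: with $\pi_{(1)}\le\dots\le\pi_{(n)}$ the order statistics and a fixed tuning constant $\gamma_0\in(0,1)$, \[ \mathrm{HC}_n^\star=\max_{1\le i\le \gamma_0 n}\sqrt n\,\frac{i/n-\pi_{(i)}}{\sqrt{\pi_{(i)}(1-\pi_{(i)})}} . \] *)

(* Defs.v *)
From HB Require Import structures.
From mathcomp Require Import all_boot all_order all_algebra.
From mathcomp Require Import all_classical all_reals all_analysis.
Set Implicit Arguments. Unset Strict Implicit. Unset Printing Implicit Defensive.
Import Order.TTheory GRing.Theory Num.Theory.
Import numFieldNormedType.Exports.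
Local Open Scope classical_set_scope.
Local Open Scope ring_scope.

(* Mutual independence of a finite family of real random variables:
   product rule for every family of Borel sets (taking B i = setT
   recovers every subfamily). *)
Definition mutually_independent {d} {T : measurableType d} {R : realType}
  (P : probability T R) (n : nat) (X : 'I_n -> T -> R) : Prop :=
  forall B : 'I_n -> set R, (forall i, measurable (B i)) ->
    P (\bigcap_(i in [set: 'I_n]) (X i @^-1` B i)) =
    (\prod_(i < n) P (X i @^-1` B i))%E.

Definition uniform01_law {d} {T : measurableType d} {R : realType}
  (P : probability T R) (X : T -> R) : Prop :=
  forall B : set R, measurable B ->
    P (X @^-1` B) = (@lebesgue_measure R) (B `&` `]0, 1[).

Definition dens_meas {R : realType} (f : R -> R) (B : set R) : \bar R :=
  (\int[@lebesgue_measure R]_(x in B `&` `]0%R, 1%R[) (f x)%:E)%E.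

Definition dens_cdf {R : realType} (f : R -> R) (t : R) : R :=
  fine (dens_meas f `]-oo, t[).

Definition mixture_law {d} {T : measurableType d} {R : realType}
  (P : probability T R) (X : T -> R) (e : R) (f : R -> R) : Prop :=
  forall B : set R, measurable B ->
    P (X @^-1` B) =
    ((1 - e)%:E * (@lebesgue_measure R) (B `&` `]0%R, 1%R[) + e%:E * dens_meas f B)%E.

(* order statistics: pi_(k) = k-th smallest (k >= 1) of x_0..x_{n-1} *)
Definition order_stat {R : realType} (n : nat) (x : 'I_n -> R) (k : nat) : R :=
  nth 0 (sort (fun a b : R => a <= b) [seq x i | i <- enum 'I_n]) k.-1.

Definition HC_star {R : realType} (gamma0 : R) (n : nat) (x : 'I_n -> R) : \bar R :=
  (\big[maxe/-oo]_(1 <= k < n.+1 | (k%:R <= gamma0 * n%:R)%R)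
     (Num.sqrt n%:R * (k%:R / n%:R - order_stat x k)
        / Num.sqrt (order_stat x k * (1 - order_stat x k)))%R%:E)%E.

(* Main.v *)
Require Import Defs.
From HB Require Import structures.
From mathcomp Require Import all_boot all_order all_algebra.
From mathcomp Require Import all_classical all_reals all_analysis.
From mathcomp Require Import ring lra measurable_realfun.
Import Order.TTheory GRing.Theory Num.Theory.
Import numFieldNormedType.Exports.
Local Open Scope ring_scope.

Lemma disc_bound (R : realFieldType) (n m : nat) (p0 : 'I_m -> R)
  (g : 'I_n -> 'I_m -> R) (e C t : R) (S : pred {ffun 'I_n -> 'I_m}) :
  0 < t -> (forall c, 0 <= p0 c) -> \sum_c p0 c = 1 ->
  (forall i c, 0 <= g i c) -> (forall i, \sum_c g i c = 1) ->
  (forall i c, g i c <= C * p0 c) ->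
  `| \sum_(s | S s) \prod_i ((1-e) * p0 (s i) + e * g i (s i))
     - \sum_(s | S s) \prod_i p0 (s i) | <= t + ((1 + e^+2 * C)^+n - 1) / t.
Proof.
move=> t0 p00 sp0 g0 sg gC.
pose r i c := g i c / p0 c.
have gE i c : g i c = p0 c * r i c.
  have [E|pn] := eqVneq (p0 c) 0.
    by apply/eqP; rewrite E mul0r eq_le g0 andbT; have := gC i c; rewrite E mulr0.
  by rewrite /r mulrC divfK.
have rC i c : p0 c * r i c ^+ 2 <= C * (p0 c * r i c).
  have [->|pn] := eqVneq (p0 c) 0; first by rewrite !(mul0r, mulr0).
  have pp : 0 < p0 c by rewrite lt_def pn p00.
  have rle : r i c <= C by rewrite /r ler_pdivrMr // gC.
  rewrite expr2 mulrA [C * _]mulrC ler_wpM2l //.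
  by rewrite -gE.
pose a i c := (1 - e) + e * r i c.
have p1E i c : (1-e) * p0 c + e * g i c = p0 c * a i c.
  by rewrite gE /a; ring.
have sp0r i : \sum_c p0 c * r i c = 1 by rewrite -(sg i); apply: eq_bigr => c _; rewrite gE.
have S1 i : \sum_c p0 c * a i c = 1.
  have -> : \sum_c p0 c * a i c = (1 - e) * \sum_c p0 c + e * \sum_c p0 c * r i c.
    by rewrite !mulr_sumr -big_split /=; apply: eq_bigr => c _; rewrite /a; ring.
  rewrite sp0 sp0r; ring.
have S2 i : 0 <= \sum_c p0 c * a i c ^+ 2 <= 1 + e ^+ 2 * C.
  apply/andP; split; first by apply: sumr_ge0 => c _; rewrite mulr_ge0 // sqr_ge0.
  have -> : \sum_c p0 c * a i c ^+ 2 = (1 - e)^+2 * \sum_c p0 c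
      + 2 * e * (1 - e) * \sum_c p0 c * r i c + e ^+ 2 * \sum_c p0 c * r i c ^+ 2.
    rewrite !mulr_sumr -!big_split /=; apply: eq_bigr => c _; rewrite /a; ring.
  rewrite sp0 sp0r !mulr1.
  have : \sum_c p0 c * r i c ^+ 2 <= C.
    rewrite -[C]mulr1 -(sp0r i) mulr_sumr; apply: ler_sum => c _; exact: rC.
  move=> h2.
  have : e ^+ 2 * \sum_c p0 c * r i c ^+ 2 <= e ^+ 2 * C by rewrite ler_wpM2l // sqr_ge0.
  have : 0 <= e ^+ 2 by rewrite sqr_ge0.
  move=> e2 h3; nra.
pose w (s : {ffun 'I_n -> 'I_m}) := \prod_i p0 (s i).
pose L (s : {ffun 'I_n -> 'I_m}) := \prod_i a i (s i).
have w0 s : 0 <= w s by apply: prodr_ge0 => i _.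
have -> : \sum_(s | S s) \prod_i ((1-e) * p0 (s i) + e * g i (s i))
     - \sum_(s | S s) \prod_i p0 (s i) = \sum_(s | S s) w s * (L s - 1).
  rewrite -sumrB; apply: eq_bigr => s _.
  under eq_bigr => i _ do rewrite p1E.
  by rewrite big_split /= mulrBr mulr1.
have sw : \sum_s w s = 1.
  by rewrite /w -(bigA_distr_bigA (fun i c => p0 c)) /= big1 // => i _; rewrite sp0.
have swL : \sum_s w s * L s = 1.
  rewrite /w /L; under eq_bigr => s _ do rewrite -big_split /=.
  by rewrite -(bigA_distr_bigA (fun i c => p0 c * a i c)) /= big1 // => i _.
have swL2 : \sum_s w s * L s ^+ 2 <= (1 + e ^+ 2 * C) ^+ n.
  rewrite /w /L; under eq_bigr => s _ do rewrite -prodrXl -big_split /=.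
  rewrite -(bigA_distr_bigA (fun i c => p0 c * a i c ^+ 2)) /=.
  have -> : (1 + e ^+ 2 * C) ^+ n = \prod_(i < n) (1 + e ^+ 2 * C).
    by rewrite prodr_const card_ord.
  apply: ler_prod => i _; exact: S2.
apply: (le_trans (ler_norm_sum _ _ _)).
apply: (@le_trans _ _ (\sum_s w s * (t + (L s - 1) ^+ 2 / t))).
  rewrite [X in _ <= X](bigID S) /= -[X in X <= _]addr0.
  apply: lerD; last first.
    apply: sumr_ge0 => s _; apply: mulr_ge0 => //; apply: addr_ge0; first exact: ltW.
    by apply: divr_ge0; [exact: sqr_ge0| exact: ltW].
  apply: ler_sum => s _; rewrite normrM ger0_norm // ler_wpM2l //.
  have [hl|hl] := leP `|L s - 1| t.
    by rewrite -[X in X <= _]addr0 lerD // divr_ge0 ?sqr_ge0 // ltW.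
  rewrite -[X in X <= _]add0r; apply: lerD; first exact: ltW.
  rewrite ler_pdivlMr // -real_normK ?num_real //.
  by rewrite expr2 ler_wpM2l // ltW.
under eq_bigr => s _ do rewrite mulrDr.
rewrite big_split /=.
under eq_bigr => s _ do rewrite mulrC.
rewrite -mulr_sumr sw mulr1 lerD2l.
under eq_bigr => s _ do rewrite mulrA.
rewrite -mulr_suml; apply: ler_wpM2r; first by rewrite invr_ge0 ltW.
have -> : \sum_s w s * (L s - 1) ^+ 2 = \sum_s w s * L s ^+ 2 - 2 * \sum_s w s * L s + \sum_s w s.
  rewrite mulr_sumr -sumrB -big_split /=; apply: eq_bigr => s _; ring.
rewrite swL sw; lra.
Qed.

Section HCcomb.
Variable R : realType.

Definition term (n k : nat) (t : R) :=
  Num.sqrt n%:R * (k%:R / n%:R - t) / Num.sqrt (t * (1 - t)).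

Lemma term_out n k t : t <= 0 \/ 1 <= t -> term n k t = 0.
Proof.
move=> H; rewrite /term.
have -> : Num.sqrt (t * (1 - t)) = 0.
  apply: ler0_sqrtr; case: H => H.
    by rewrite mulr_le0_ge0 //; lra.
  by rewrite mulr_ge0_le0 //; lra.
by rewrite invr0 mulr0.
Qed.

Lemma term_mono n k t t' : (k <= n)%N -> 0 < t -> t <= t' -> t' < 1 ->
  term n k t' <= term n k t.
Proof.
move=> kn t0 tt t1.
rewrite /term; set a := k%:R / n%:R.
have a0 : 0 <= a by rewrite /a divr_ge0.
have a1 : a <= 1.
  rewrite /a; have [->|n0] := eqVneq n 0%N; first by rewrite invr0 mulr0.
  by rewrite ler_pdivrMr ?mul1r ?ler_nat // ltr0n lt0n.
rewrite -!mulrA ler_wpM2l ?sqrtr_ge0 //.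
set u := Num.sqrt t; set v := Num.sqrt (1 - t).
set u' := Num.sqrt t'; set v' := Num.sqrt (1 - t').
have t'0 : 0 < t' by lra.
have u0 : 0 < u by rewrite sqrtr_gt0.
have u'0 : 0 < u' by rewrite sqrtr_gt0.
have v0 : 0 < v by rewrite sqrtr_gt0; lra.
have v'0 : 0 < v' by rewrite sqrtr_gt0; lra.
have uu : u <= u' by rewrite ler_sqrt //; lra.
have vv : v' <= v by rewrite ler_sqrt //; lra.
have tE : t = u ^+ 2 by rewrite sqr_sqrtr // ltW.
have t'E : t' = u' ^+ 2 by rewrite sqr_sqrtr // ltW.
have sE : 1 - t = v ^+ 2 by rewrite sqr_sqrtr //; lra.
have s'E : 1 - t' = v' ^+ 2 by rewrite sqr_sqrtr //; lra.
rewrite (sqrtrM (1 - t) (ltW t0)) (sqrtrM (1 - t') (ltW t'0)) -/u -/v -/u' -/v'.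
have p : 0 < u * v by rewrite mulr_gt0.
have p' : 0 < u' * v' by rewrite mulr_gt0.
rewrite ler_pdivrMr // mulrAC ler_pdivlMr //.
have h1 : v' * u <= v * u' by rewrite ler_pM // ltW.
have h2 : u * v' <= u' * v by rewrite ler_pM // ltW.
have e1 : a - t' = a * v' ^+ 2 - (1 - a) * u' ^+ 2 by rewrite -s'E -t'E; ring.
have e2 : a - t = a * v ^+ 2 - (1 - a) * u ^+ 2 by rewrite -sE -tE; ring.
rewrite e1 e2.
have h3 : a * v * v' * (v' * u - v * u') <= 0.
  by rewrite mulr_ge0_le0 ?subr_le0 // !mulr_ge0 // ltW.
have h4 : 0 <= (1 - a) * u * u' * (u' * v - u * v').
  by rewrite !mulr_ge0 ?subr_ge0 // ?ltW //; lra.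
nra.
Qed.

Variables (n : nat) (h : R).

Definition cnt (t : R) := #|[set k : 'I_n.+1 | ~~ (h < term n k t)]|.
Definition cN (t : R) : nat :=
  if t <= 0 then 0%N else if 1 <= t then n.+3 else (cnt t).+1.

Lemma cnt_le t : (cnt t <= n.+1)%N.
Proof. by rewrite /cnt -[X in (_ <= X)%N](card_ord n.+1) max_card. Qed.

Lemma cN_lt t : (cN t < n.+4)%N.
Proof.
rewrite /cN; case: ifP => // _; case: ifP => // _.
by apply: leq_trans (cnt_le t) _.
Qed.

Lemma cnt_mono t t' : 0 < t -> t <= t' -> t' < 1 ->
  [set k : 'I_n.+1 | ~~ (h < term n k t)] \subset [set k : 'I_n.+1 | ~~ (h < term n k t')].
Proof.
move=> t0 tt t1; apply/fintype.subsetP => k; rewrite !inE -!leNgt => hk.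
apply: (le_trans _ hk); apply: term_mono => //; rewrite -ltnS; exact: ltn_ord.
Qed.

Lemma cN_mono t t' : t <= t' -> (cN t <= cN t')%N.
Proof.
move=> tt; rewrite /cN.
have [//|t0] := leP t 0.
have [t'0|t'0] := leP t' 0; first by lra.
have [t'1|t'1] := leP 1 t'; have [t1|t1] := leP 1 t.
- by [].
- by apply: leq_trans (cnt_le t) _.
- by lra.
- by rewrite /cnt; apply: subset_leq_card; apply: cnt_mono.
Qed.

Lemma cN_fiber t t' : cN t = cN t' -> forall k : 'I_n.+1,
  (h < term n k t) = (h < term n k t').
Proof.
wlog tt : t t' / t <= t'.
  move=> W E k; have [|] := leP t t'; first by move=> ?; exact: W.
  by move=> ?; symmetry; apply: W => //; exact: ltW.
move=> E k.
move: E; rewrite /cN.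
have [t0|t0] := leP t 0.
  have [t'0|t'0] := leP t' 0; first by rewrite !term_out //; left.
  by case: (leP 1 t').
have [t'0|t'0] := leP t' 0; first by lra.
have [t1|t1] := leP 1 t.
  have [t'1|t'1] := leP 1 t'; first by rewrite !term_out //; right.
  by lra.
have [t'1|t'1] := leP 1 t'.
  move=> [] E; by have := cnt_le t; rewrite E ltnn.
move=> [] E.
have sub := @cnt_mono t t' t0 tt t'1.
have := subset_cardP E sub => /(_ k); rewrite !inE => /negb_inj ->.
by [].
Qed.

Lemma cN_interval (j : nat) : is_interval [set t | cN t = j].
Proof.
move=> s t /= sj tj z /andP[sz zt].
apply/eqP; rewrite eqn_leq; apply/andP; split.
  by rewrite -tj cN_mono.
by rewrite -sj cN_mono.
Qed.

End HCcomb.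

Section HCinv.
Variable R : realType.
Variables (n : nat) (h gamma0 : R).
Local Notation cN := (@cN R n h).

Lemma sort_cN (s : seq R) :
  map cN (sort (fun a b : R => a <= b) s) = sort leq (map cN s).
Proof.
apply: (sorted_eq leq_trans anti_leq).
- rewrite sorted_map; apply: (sub_sorted _ (sort_sorted le_total s)).
  by move=> a b /= ab; exact: cN_mono.
- by apply: sort_sorted; exact: leq_total.
- apply: perm_trans (perm_map cN (permEl (perm_sort _ s))) _.
  by rewrite perm_sym; apply: permEl; exact: perm_sort.
Qed.

Lemma cN_os (x y : 'I_n -> R) k : (forall i, cN (x i) = cN (y i)) ->
  (0 < k <= n)%N -> cN (order_stat x k) = cN (order_stat y k).
Proof.
move=> E /andP[k0 kn]; rewrite /order_stat.
have sz (z : 'I_n -> R) : (k.-1 < size (sort (fun a b : R => (a <= b)%R) [seq z i | i <- enum 'I_n]))%N.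
  by rewrite size_sort size_map size_enum_ord prednK.
rewrite -(nth_map 0 (cN 0) cN (sz x)) -(nth_map 0 (cN 0) cN (sz y)) !sort_cN.
have E2 : cN \o x =1 cN \o y by move=> i; exact: E.
by rewrite -!map_comp (eq_map E2).
Qed.

Lemma lt_bigmaxe (s : seq nat) (P : pred nat) (F : nat -> \bar R) (m : \bar R) :
  (m < \big[maxe/-oo]_(i <- s | P i) F i)%E <->
  exists i, [/\ i \in s, P i & (m < F i)%E].
Proof.
elim: s => [|a s IH].
  rewrite big_nil; split; first by rewrite ltNge leNye.
  by case=> i [].
rewrite big_cons; case: ifP => Pa.
  rewrite lt_max; split.
    case/orP => [H|/IH [i [i_s Pi Hi]]]; first by exists a; rewrite mem_head.
    by exists i; rewrite in_cons i_s orbT.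
  case=> i []; rewrite in_cons => /orP[/eqP->|i_s] Pi Hi; first by rewrite Hi.
  by apply/orP; right; apply/IH; exists i.
split.
  by case/IH => i [i_s Pi Hi]; exists i; rewrite in_cons i_s orbT.
case=> i []; rewrite in_cons => /orP[/eqP->|i_s] Pi Hi; first by rewrite Pa in Pi.
by apply/IH; exists i.
Qed.

Lemma HC_inv (x y : 'I_n -> R) : (forall i, cN (x i) = cN (y i)) ->
  (h%:E < HC_star gamma0 y)%E -> (h%:E < HC_star gamma0 x)%E.
Proof.
move=> E; rewrite /HC_star => /lt_bigmaxe [k [ks Pk Hk]].
apply/lt_bigmaxe; exists k; split => //.
move: ks; rewrite mem_index_iota => /andP[k1 kn].
rewrite lte_fin in Hk *.
have := @cN_fiber R n h _ _ (@cN_os x y k E (ltac:(by rewrite k1 -ltnS))) (Ordinal kn).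
by rewrite /term /= lte_fin => ->.
Qed.

End HCinv.

Local Open Scope classical_set_scope.
Local Open Scope ring_scope.

Lemma expR_sub1 (R : realType) (y : R) : 0 <= y <= 1/2 -> expR y - 1 <= 2 * y.
Proof.
move=> /andP[y0 y1].
have E0 := expR_gt0 y.
have h1 : 1 - y <= (expR y)^-1 by rewrite -expRN; have := expR_ge1Dx (- y); lra.
have h2 : (1 - y) * expR y <= 1.
  by have := ler_wpM2r (ltW E0) h1; rewrite mulVf ?gt_eqF.
have h3 : 1 / 2 * expR y <= (1 - y) * expR y by apply: ler_wpM2r; [exact: ltW|lra].
have h4 : expR y <= 2 by lra.
have h5 : y * expR y <= y * 2 by rewrite ler_wpM2l.
have h6 : (1 - y) * expR y = expR y - y * expR y by ring.
lra.
Qed.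

Lemma n_eps2 (R : realType) (beta : R) (n : nat) : (0 < n)%N ->
  n%:R * (n%:R `^ (- beta)) ^+ 2 = expR ((1 - 2 * beta) * ln (n%:R : R)).
Proof.
move=> n0.
have nz : (n%:R : R) != 0 by rewrite pnatr_eq0 -lt0n.
rewrite /powR (negbTE nz) -expRM_natl -{1}(@lnK _ n%:R) ?posrE ?ltr0n //.
by rewrite -expRD; congr expR; ring.
Qed.

Lemma V_small (R : realType) (beta C eta : R) : 1/2 < beta -> 0 <= C -> 0 < eta ->
  \forall n \near \oo, (1 + ((n%:R : R) `^ (- beta)) ^+ 2 * C) ^+ n - 1 <= eta.
Proof.
move=> b2 C0 e0.
set M := Num.min (1/2) (eta/2).
have M0 : 0 < M by rewrite /M lt_min; apply/andP; split; lra.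
set delta := M / (C + 1).
have d0 : 0 < delta by rewrite /delta divr_gt0 //; lra.
have dC : C * delta <= M.
  rewrite /delta mulrA ler_pdivrMr; last by lra.
  have : 0 <= C * M by rewrite mulr_ge0 // ltW.
  lra.
set K := ln delta / (1 - 2 * beta).
near=> n.
have n0 : (0 < n)%N by near: n; exact: nbhs_infty_gt.
have nK : expR K <= n%:R by near: n; exact: nbhs_infty_ger.
have lnK' : K <= ln (n%:R : R).
  by rewrite -[X in X <= _]expRK ler_ln ?posrE ?expR_gt0 ?ltr0n.
set e := (n%:R : R) `^ (- beta).
set y := n%:R * (e ^+ 2 * C).
have ney : n%:R * e ^+ 2 <= delta.
  rewrite n_eps2 // -[X in _ <= X](@lnK _ delta) ?posrE // ler_expR.
  have : (1 - 2 * beta) * ln (n%:R : R) <= (1 - 2 * beta) * K.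
    by rewrite ler_wnM2l //; lra.
  have nz : 1 - 2 * beta != 0 by rewrite ltr0_neq0 //; lra.
  by move=> H; apply: le_trans H _; rewrite /K mulrC divfK.
have y0 : 0 <= y by rewrite /y mulr_ge0 // mulr_ge0 // sqr_ge0.
have yd : y <= C * delta.
  by rewrite /y mulrA mulrC ler_wpM2l.
have ymin : y <= M by apply: le_trans dC.
move: ymin; rewrite /M le_min => /andP[y1 y2].
have h1 : (1 + e ^+ 2 * C) ^+ n <= expR y.
  rewrite /y expRM_natl; apply: lerXn2r; rewrite ?nnegrE ?expR_ge0 ?expR_ge1Dx //.
  by rewrite addr_ge0 // mulr_ge0 // sqr_ge0.
have := @expR_sub1 R y (ltac:(by rewrite y0 y1)).
lra.
Unshelve. all: by end_near.
Qed.

Section Part.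
Context d (T : measurableType d) (R : realType) (mu : {measure set T -> \bar R}).
Context (I : finType) (V : T -> I) (mV : forall i, measurable [set w | V w = i]).

Lemma part_meas (s : seq I) (Q : pred I) :
  measurable [set w | V w \in s /\ Q (V w)].
Proof.
elim: s => [|a s IH].
  rewrite (_ : [set w | _] = set0) //; apply/seteqP; split => w //=.
  by rewrite in_nil => -[].
case Qa: (Q a).
  rewrite (_ : [set w | _] = [set w | V w = a] `|` [set w | V w \in s /\ Q (V w)]).
    exact: measurableU.
  apply/seteqP; split => w /=.
    by rewrite in_cons => -[/orP[/eqP->|ws] Qw]; [left|right].
  by case=> [->|[ws Qw]]; rewrite in_cons ?eqxx ?ws ?orbT.
rewrite (_ : [set w | _] = [set w | V w \in s /\ Q (V w)]) //.
apply/seteqP; split => w /=.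
  by rewrite in_cons => -[/orP[/eqP Ea|ws] Qw] //; rewrite Ea Qa in Qw.
by case=> ws Qw; rewrite in_cons ws orbT.
Qed.

Lemma part_sum (s : seq I) (Q : pred I) : uniq s ->
  mu [set w | V w \in s /\ Q (V w)] = (\sum_(i <- s | Q i) mu [set w | V w = i])%E.
Proof.
elim: s => [|a s IH].
  rewrite big_nil (_ : [set w | _] = set0) ?measure0 //; apply/seteqP; split => w //=.
  by rewrite in_nil => -[].
rewrite /= => /andP[aS us]; rewrite big_cons.
case Qa: (Q a).
  rewrite (_ : [set w | _] = [set w | V w = a] `|` [set w | V w \in s /\ Q (V w)]).
    rewrite measureU //.
    - exact: (congr1 (fun z => mu [set w | V w = a] + z)%E (IH us)).
    - exact: part_meas.
    - apply/seteqP; split => w //= [Ea [ws _]].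
      by move: aS; rewrite -Ea ws.
  apply/seteqP; split => w /=.
    by rewrite in_cons => -[/orP[/eqP->|ws] Qw]; [left|right].
  by case=> [->|[ws Qw]]; rewrite in_cons ?eqxx ?ws ?orbT.
rewrite -(IH us) (_ : [set w | _] = [set w | V w \in s /\ Q (V w)]) //.
apply/seteqP; split => w /=.
  by rewrite in_cons => -[/orP[/eqP Ea|ws] Qw] //; rewrite Ea Qa in Qw.
by case=> ws Qw; rewrite in_cons ws orbT.
Qed.

Lemma part_measT (Q : pred I) : measurable [set w | Q (V w)].
Proof.
rewrite (_ : [set w | Q (V w)] = [set w | V w \in enum I /\ Q (V w)]).
  exact: part_meas.
apply/seteqP; split => w /=; first by rewrite mem_enum.
by case.
Qed.

Lemma part_sumT (Q : pred I) :
  mu [set w | Q (V w)] = (\sum_(i | Q i) mu [set w | V w = i])%E.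
Proof.
rewrite (_ : [set w | Q (V w)] = [set w | V w \in enum I /\ Q (V w)]).
  by rewrite part_sum ?enum_uniq // big_enum_cond.
apply/seteqP; split => w /=; first by rewrite mem_enum.
by case.
Qed.

End Part.

Lemma event_prob d (T : measurableType d) (R : realType) (P : probability T R)
  n m (c : R -> 'I_m) (mc : forall j, measurable [set t | c t = j])
  (X : 'I_n -> T -> R) (mX : forall i, measurable_fun setT (X i))
  (indep : mutually_independent P X) (Q : pred {ffun 'I_n -> 'I_m}) :
  P [set w | Q [ffun i => c (X i w)]] =
  (\sum_(s | Q s) \prod_(i < n) P (X i @^-1` [set t | c t = s i]))%E.
Proof.
have mXi i B : measurable B -> measurable (X i @^-1` B).
  by move=> mB; rewrite -[X i @^-1` B]setTI; apply: mX.
have VE s : [set w | [ffun i => c (X i w)] = s] =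
    \bigcap_(i in [set: 'I_n]) X i @^-1` [set t | c t = s i].
  apply/seteqP; split => w /=.
    by move=> <- i _ /=; rewrite ffunE.
  by move=> H; apply/ffunP => i; rewrite ffunE; apply: H.
have mV s : measurable [set w | [ffun i => c (X i w)] = s].
  rewrite VE; apply: fin_bigcap_measurable; first exact: finite_finset.
  by move=> i _; apply: mXi.
rewrite (@part_sumT _ _ _ P _ (fun w => [ffun i => c (X i w)]) mV).
apply: eq_bigr => s _; rewrite VE; apply: indep => i; exact: mc.
Qed.

Lemma event_meas d (T : measurableType d) (R : realType)
  n m (c : R -> 'I_m) (mc : forall j, measurable [set t | c t = j])
  (X : 'I_n -> T -> R) (mX : forall i, measurable_fun setT (X i))
  (Q : pred {ffun 'I_n -> 'I_m}) :
  measurable [set w | Q [ffun i => c (X i w)]].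
Proof.
have mXi i B : measurable B -> measurable (X i @^-1` B).
  by move=> mB; rewrite -[X i @^-1` B]setTI; apply: mX.
have VE s : [set w | [ffun i => c (X i w)] = s] =
    \bigcap_(i in [set: 'I_n]) X i @^-1` [set t | c t = s i].
  apply/seteqP; split => w /=.
    by move=> <- i _ /=; rewrite ffunE.
  by move=> H; apply/ffunP => i; rewrite ffunE; apply: H.
have mV s : measurable [set w | [ffun i => c (X i w)] = s].
  rewrite VE; apply: fin_bigcap_measurable; first exact: finite_finset.
  by move=> i _; apply: mXi.
exact: (@part_measT d T _ (fun w => [ffun i => c (X i w)]) mV Q).
Qed.

Local Open Scope classical_set_scope.
Local Open Scope ring_scope.

Lemma per_n (R : realType) (n : nat) (beta gamma0 C hn : R) (f : 'I_n -> R -> R)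
  d0 (T0 : measurableType d0) (P0 : probability T0 R) (X0 : 'I_n -> T0 -> R)
  d1 (T1 : measurableType d1) (P1 : probability T1 R) (X1 : 'I_n -> T1 -> R) :
  (0 < n)%N ->
  (forall i x, 0 <= f i x) -> (forall i, {within `]0, 1[, continuous (f i)}) ->
  (forall i x, 0 < x < 1 -> f i x <= C) ->
  (forall i, measurable_fun setT (X0 i)) -> mutually_independent P0 X0 ->
  (forall i, uniform01_law P0 (X0 i)) ->
  (forall i, measurable_fun setT (X1 i)) -> mutually_independent P1 X1 ->
  (forall i, mixture_law P1 (X1 i) (n%:R `^ (- beta)) (f i)) ->
  exists D : R,
    (P0 [set w | hn%:E < HC_star gamma0 (fun i => X0 i w)]
     + P1 [set w | HC_star gamma0 (fun i => X1 i w) <= hn%:E])%E = (1 + D)%:E /\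
    forall t, 0 < t -> `|D| <= t + ((1 + (n%:R `^ (- beta)) ^+ 2 * C) ^+ n - 1) / t.
Proof.
move=> n0 f0 fc fC mX0 ind0 law0 mX1 ind1 law1.
set e := (n%:R : R) `^ (- beta).
have e0 : 0 < e by rewrite powR_gt0 // ltr0n.
pose c (t : R) : 'I_n.+4 := inord (cN R n hn t).
have cE t : nat_of_ord (c t) = cN R n hn t by rewrite inordK // cN_lt.
pose J (j : 'I_n.+4) := [set t : R | c t = j].
have JE j : J j = [set t | cN R n hn t = nat_of_ord j].
  apply/seteqP; split => t /=; first by move=> <-.
  by move=> H; apply: val_inj; rewrite /= cE.
have mJ j : measurable (J j).
  by rewrite JE; apply: is_interval_measurable; exact: cN_interval.
pose Q (s : {ffun 'I_n -> 'I_n.+4}) : bool :=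
  `[< exists y : 'I_n -> R, (forall i, c (y i) = s i) /\ (hn%:E < HC_star gamma0 y)%E >].
have evE d (T : measurableType d) (X : 'I_n -> T -> R) :
    [set w | (hn%:E < HC_star gamma0 (fun i => X i w))%E] =
    [set w | Q [ffun i => c (X i w)]].
  apply/seteqP; split => w /=.
    move=> H; apply/asboolP; exists (fun i => X i w); split => // i.
    by rewrite ffunE.
  move/asboolP => [y [Ey Hy]]; apply: (@HC_inv R n hn gamma0 _ y) Hy => i.
  by rewrite -!cE Ey ffunE.
pose p0 j := fine (lebesgue_measure (J j `&` `]0, 1[)).
pose g i j := fine (dens_meas (f i) (J j)).
have L01 : lebesgue_measure (`]0, 1[ : set R) = 1%E.
  rewrite lebesgue_measure_itv /=; case: ifPn => [_|]; last by rewrite lte01.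
  by rewrite oppr0 adde0.
have mJI j : measurable (J j `&` `]0, 1[) by apply: measurableI.
have p0E j : lebesgue_measure (J j `&` `]0, 1[) = (p0 j)%:E.
  rewrite fineK // ge0_fin_numE ?measure_ge0 //.
  apply: (@le_lt_trans _ _ 1%E); last exact: ltry.
  rewrite -L01; apply: le_measure; [rewrite inE; exact: mJI|rewrite inE; exact: measurable_itv|exact: subIsetr].
have mf i : measurable_fun (`]0, 1[ : set R) (f i).
  by apply: subspace_continuous_measurable_fun; [exact: measurable_itv|exact: fc].
have gle i j : (dens_meas (f i) (J j) <= C%:E * (p0 j)%:E)%E.
  rewrite /dens_meas.
  have -> : (C%:E * (p0 j)%:E = \int[lebesgue_measure]_(x in J j `&` `]0%R, 1%R[) (cst C%:E) x)%E.
    rewrite integral_cst; last exact: mJI.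
    congr (_ * _)%E; exact: (esym (p0E j)).
  apply: ge0_le_integral.
  - exact: mJI.
  - by move=> x _; rewrite lee_fin f0.
  - apply/measurable_EFinP; apply: measurable_funS (mf i); [exact: measurable_itv|exact: subIsetr].
  - exact: measurable_cst.
  - move=> x [_ /=]; rewrite in_itv /= => xin; rewrite lee_fin fC //.
have gE i j : dens_meas (f i) (J j) = (g i j)%:E.
  rewrite fineK // ge0_fin_numE.
    by apply: le_lt_trans (gle i j) _; exact: ltry.
  by apply: integral_ge0 => x _; rewrite lee_fin f0.
have p00 j : 0 <= p0 j by rewrite -lee_fin -p0E measure_ge0.
have g0 i j : 0 <= g i j.
  by rewrite -lee_fin -gE; apply: integral_ge0 => x _; rewrite lee_fin f0.
have gC i j : g i j <= C * p0 j by rewrite -lee_fin EFinM -gE gle.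
have P0E i j : P0 (X0 i @^-1` J j) = (p0 j)%:E by rewrite law0 // p0E.
have P1E i j : P1 (X1 i @^-1` J j) = ((1 - e) * p0 j + e * g i j)%:E.
  by rewrite law1 // p0E gE.
have mXJ0 i j : measurable [set w | c (X0 i w) = j].
  by rewrite -[X in measurable X]setTI; exact: (mX0 i measurableT _ (mJ j)).
have mXJ1 i j : measurable [set w | c (X1 i w) = j].
  by rewrite -[X in measurable X]setTI; exact: (mX1 i measurableT _ (mJ j)).
pose i0 : 'I_n := Ordinal n0.
have sum0 : \sum_j p0 j = 1.
  have H := @part_sumT _ _ _ P0 _ (fun w => c (X0 i0 w)) (mXJ0 i0) xpredT.
  have ST : [set w : T0 | xpredT (c (X0 i0 w))] = setT by apply/seteqP.
  have : ((\sum_j p0 j)%:E = 1)%E.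
    rewrite -sumEFin; apply: (eq_trans _ (probability_setT P0)); rewrite -ST.
    apply: (eq_trans _ (esym H)); apply: eq_bigr => j _; by rewrite -(P0E i0 j).
  by move=> [].
have sum1 i : \sum_j g i j = 1.
  have H := @part_sumT _ _ _ P1 _ (fun w => c (X1 i w)) (mXJ1 i) xpredT.
  have ST : [set w : T1 | xpredT (c (X1 i w))] = setT by apply/seteqP.
  have : ((\sum_j ((1 - e) * p0 j + e * g i j))%:E = 1)%E.
    rewrite -sumEFin; apply: (eq_trans _ (probability_setT P1)); rewrite -ST.
    apply: (eq_trans _ (esym H)); apply: eq_bigr => j _; by rewrite -(P1E i j).
  move=> [] /eqP; rewrite big_split /= -!mulr_sumr sum0 => /eqP H1.
  have : e * (\sum_j g i j) = e * 1 by lra.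
  by move/(mulfI (lt0r_neq0 e0)).
have E0 : P0 [set w | (hn%:E < HC_star gamma0 (fun i => X0 i w))%E] =
    (\sum_(s | Q s) \prod_i p0 (s i))%:E.
  rewrite evE (@event_prob _ _ _ P0 n n.+4 c mJ X0 mX0 ind0 Q) -sumEFin.
  by apply: eq_bigr => s _; rewrite -prodEFin; apply: eq_bigr => i _; exact: P0E.
have E1 : P1 [set w | (HC_star gamma0 (fun i => X1 i w) <= hn%:E)%E] =
    (1 - \sum_(s | Q s) \prod_i ((1 - e) * p0 (s i) + e * g i (s i)))%:E.
  rewrite (_ : [set w | (HC_star gamma0 (fun i => X1 i w) <= hn%:E)%E] = ~` [set w | (hn%:E < HC_star gamma0 (fun i => X1 i w))%E]); last first.
    apply/seteqP; split => w /=; rewrite leNgt; first by move/negP.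
    by move=> H; apply/negP.
  rewrite probability_setC; last by rewrite evE; exact: (@event_meas _ _ _ n n.+4 c mJ X1 mX1 Q).
  rewrite evE (@event_prob _ _ _ P1 n n.+4 c mJ X1 mX1 ind1 Q) EFinB -sumEFin.
  congr (_ - _)%E.
  by apply: eq_bigr => s _; rewrite -prodEFin; apply: eq_bigr => i _; exact: P1E.
exists (\sum_(s | Q s) \prod_i p0 (s i) -
        \sum_(s | Q s) \prod_i ((1 - e) * p0 (s i) + e * g i (s i))).
split.
  by rewrite E0 E1 -EFinD; congr EFin; ring.
move=> t t0; rewrite distrC.
exact: (@disc_bound R n n.+4 p0 g e C t Q t0 p00 sum0 g0 sum1 gC).
Qed.

Local Open Scope classical_set_scope.
Local Open Scope ring_scope.

Theorem theorem1 (R : realType)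
  (beta r gamma0 C : R) (alpha : R -> R -> R) (delta : nat -> R)
  (f : forall n : nat, 'I_n -> R -> R)
  (d0 : nat -> measure_display) (T0 : forall n, measurableType (d0 n))
  (P0 : forall n, probability (T0 n) R) (X0 : forall n, 'I_n -> T0 n -> R)
  (d1 : nat -> measure_display) (T1 : forall n, measurableType (d1 n))
  (P1 : forall n, probability (T1 n) R) (X1 : forall n, 'I_n -> T1 n -> R)
  (h : nat -> R) :
  1 / 2 < beta < 1 -> 0 < r -> 0 < gamma0 < 1 ->
  (* alpha : [0,1] x (0,oo) -> [0,oo), continuous, nondecreasing in q,
     nonincreasing in r *)
  {within [set p : R * R | 0 <= p.1 <= 1 /\ 0 < p.2],
     continuous (fun p : R * R => alpha p.1 p.2)} ->
  (forall q s, 0 <= q <= 1 -> 0 < s -> 0 <= alpha q s) ->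
  (forall q q' s, 0 <= q <= q' -> q' <= 1 -> 0 < s -> alpha q s <= alpha q' s) ->
  (forall q s s', 0 <= q <= 1 -> 0 < s <= s' -> alpha q s' <= alpha q s) ->
  (* each G_{n,i} has a continuous density f n i on (0,1), bounded by C,
     is a probability on (0,1), and is stochastically smaller than Unif(0,1) *)
  (forall n (i : 'I_n) x, 0 <= f n i x) ->
  (forall n (i : 'I_n), {within `]0, 1[, continuous (f n i)}) ->
  (forall n (i : 'I_n) x, 0 < x < 1 -> f n i x <= C) ->
  (forall n (i : 'I_n), dens_meas (f n i) setT = 1%E) ->
  (forall n (i : 'I_n) t, 0 < t < 1 -> t <= dens_cdf (f n i) t) ->
  (* tail condition (T) *)
  delta @ \oo --> 0 ->
  (forall n (i : 'I_n) q, 0 < q <= 1 ->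
     0 < dens_cdf (f n i) (n%:R `^ (- q)) /\
     `| - ln (dens_cdf (f n i) (n%:R `^ (- q))) - alpha q r * ln n%:R |
       <= delta n * ln n%:R) ->
  (* r < rho(beta), i.e. max_{q in (0,1]} ((1+q)/2 - alpha(q,r) - beta) < 0 *)
  sup [set (1 + q) / 2 - alpha q r - beta | q in `]0, 1]] < 0 ->
  (* H_0: pi_1..pi_n i.i.d. Unif(0,1) *)
  (forall n (i : 'I_n), measurable_fun setT (X0 n i)) ->
  (forall n, mutually_independent (P0 n) (X0 n)) ->
  (forall n (i : 'I_n), uniform01_law (P0 n) (X0 n i)) ->
  (* H_1^(n): independent, pi_i ~ (1 - eps_n) Unif(0,1) + eps_n G_{n,i},
     eps_n = n^(-beta) *)
  (forall n (i : 'I_n), measurable_fun setT (X1 n i)) ->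
  (forall n, mutually_independent (P1 n) (X1 n)) ->
  (forall n (i : 'I_n), mixture_law (P1 n) (X1 n i) (n%:R `^ (- beta)) (f n i)) ->
  ((P0 n [set w | (h n)%:E < HC_star gamma0 (fun i => X0 n i w)]
    + P1 n [set w | HC_star gamma0 (fun i => X1 n i w) <= (h n)%:E])%E
     @[n --> \oo] --> 1%E).

Proof.
move=> /andP[b1 _] _ _ _ _ _ _ f0 fc fC _ _ _ _ _ mX0 ind0 law0 mX1 ind1 law1.
have C0 : 0 <= C.
  have h1a : (0 : R) < 1 / 2 by lra.
  have h1b : (1 / 2 : R) < 1 by lra.
  have h1 : 0 < (1 / 2 : R) < 1 by rewrite h1a h1b.
  exact: le_trans (f0 1%N ord0 (1/2)) (fC 1%N ord0 _ h1).
apply: cvg_EFin.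
  near=> n.
  have n0 : (0 < n)%N by near: n; exact: nbhs_infty_gt.
  have [D [-> _]] := @per_n R n beta gamma0 C (h n) (f n) _ _ (P0 n) (X0 n) _ _ (P1 n) (X1 n) n0 (f0 n) (fc n) (fC n)
    (mX0 n) (ind0 n) (law0 n) (mX1 n) (ind1 n) (law1 n).
  by [].
apply/cvgrPdist_le => eta eta0.
have V := @V_small R beta C (eta ^+ 2 / 4) b1 C0 (ltac:(by rewrite divr_gt0 // exprn_gt0) : 0 < eta ^+ 2 / 4).
near=> n.
have n0 : (0 < n)%N by near: n; exact: nbhs_infty_gt.
have [D [HE HD]] := @per_n R n beta gamma0 C (h n) (f n) _ _ (P0 n) (X0 n) _ _ (P1 n) (X1 n) n0 (f0 n) (fc n) (fC n)
    (mX0 n) (ind0 n) (law0 n) (mX1 n) (ind1 n) (law1 n).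
rewrite /= HE /= opprD addrA subrr add0r normrN.
have e2 : 0 < eta / 2 by rewrite divr_gt0.
apply: (le_trans (HD _ e2)).
have Vn : (1 + ((n%:R : R) `^ (- beta)) ^+ 2 * C) ^+ n - 1 <= eta ^+ 2 / 4 by near: n; exact: V.
have : ((1 + ((n%:R : R) `^ (- beta)) ^+ 2 * C) ^+ n - 1) / (eta / 2) <= eta / 2.
  rewrite ler_pdivrMr //; apply: (le_trans Vn); rewrite expr2; lra.
lra.
Unshelve. all: by end_near.
Qed.
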